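(* Under the hypotheses of the following setting: $f:\mathbb{R}\to(0,+\infty)$ Lipschitz continuous and continuously differentiable with $f>0$, $f'\le0$, $\lim_{x\to+\infty}f(x)=0$; $r>0$; $A:(-\infty,r)\to\mathbb{R}$ continuous; and $\tau:[0,r)\to[0,\infty)$ a $C^1$ solution of $\tau'(t)=1-\frac{f(A(t))}{f(A(t-\tau(t)))}$ for $t\in[0,r)$ with $\tau(0)=\tau_0\ge0$. Then: if $\tau_0>0$, then $\tau(t)>0$ for all $t\in[0,r)$; and if $\tau_0=0$, then $\tau(t)=0$ for all $t\in[0,r)$. *)

(* Defs.v *)
From Stdlib Require Import Reals.
Open Scope R_scope.

(* One-sided-aware derivative of g at x relative to a domain D
   (used on D = [0,r), giving the right derivative at 0). *)
Definition derivable_within_lim (D : R -> Prop) (g : R -> R) (x l : R) : Prop :=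
  forall eps : R, eps > 0 -> exists delta : R, delta > 0 /\
    forall h : R, h <> 0 -> Rabs h < delta -> D (x + h) ->
      Rabs ((g (x + h) - g x) / h - l) < eps.

Definition Lipschitz (f : R -> R) : Prop :=
  exists L : R, forall x y : R, Rabs (f x - f y) <= L * Rabs (x - y).

Definition tends_to_zero_at_pinf (f : R -> R) : Prop :=
  forall eps : R, eps > 0 -> exists M : R, forall x : R, x > M -> Rabs (f x) < eps.

(* Main.v *)
Require Import Defs.
From Stdlib Require Import Reals Lra.
From Coquelicot Require Import Coquelicot.
Open Scope R_scope.

Lemma cont_eps (F : R -> R) (x : R) : continuity_pt F x ->
  forall eps, eps > 0 -> exists d, d > 0 /\ forall y, Rabs (y - x) < d -> Rabs (F y - F x) < eps.
Proof.
  intros Hc eps He. destruct (Hc eps He) as [d [Hd H]].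
  exists d; split; auto. intros y Hy.
  destruct (Req_dec y x) as [->|Hne].
  - rewrite Rminus_eq_0, Rabs_R0; lra.
  - apply (H y). split. split; [exact I| auto]. exact Hy.
Qed.

Lemma zero_of_small x : (forall eps, eps > 0 -> Rabs x < eps) -> x = 0.
Proof.
  intros H. destruct (Req_dec x 0) as [|Hn]; auto.
  exfalso. specialize (H (Rabs x) (Rabs_pos_lt _ Hn)). lra.
Qed.

Lemma der_cont (F : R -> R) (x l : R) : is_derive F x l -> continuity_pt F x.
Proof. intros H. apply continuity_pt_filterlim. apply (ex_derive_continuous (V:=R_NormedModule) F). exists l; exact H. Qed.

Lemma Phi_der (g : R -> R) r : (forall z, z < r -> continuity_pt g z) -> 0 < r ->
  forall x, x < r -> is_derive (fun x => RInt g 0 x) x (g x).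
Proof.
  intros Hc Hr x Hx.
  apply is_derive_RInt with (a := 0).
  - assert (He : 0 < (r - x) / 2) by lra.
    exists (mkposreal _ He). intros y Hy.
    change (Rabs (y - x) < (r - x) / 2) in Hy.
    apply RInt_correct. apply ex_RInt_continuous. intros z Hz.
    apply continuity_pt_filterlim. apply Hc.
    destruct Hz as [_ Hz]. apply Rle_lt_trans with (1 := Hz).
    apply Rmax_lub_lt; [lra|]. apply Rabs_def2 in Hy. lra.
  - apply continuity_pt_filterlim, Hc; auto.
Qed.

Lemma Phi_strict (g : R -> R) r : (forall z, z < r -> continuity_pt g z) -> 0 < r ->
  (forall z, 0 < g z) ->
  forall a b, a < b -> b < r -> RInt g 0 a < RInt g 0 b.
Proof.
  intros Hc Hr Hg a b Hab Hb.
  destruct (MVT_gen (fun x => RInt g 0 x) a b g) as [c [Hc1 Hc2]].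
  - intros x Hx. apply (Phi_der g r); auto. rewrite Rmax_right in Hx; lra.
  - intros x Hx. eapply der_cont. apply (Phi_der g r); auto. rewrite Rmax_right in Hx; lra.
  - simpl in Hc2. specialize (Hg c). nra.
Qed.
Theorem mainTheorem3
  (f f' : R -> R) (r : R) (A tau : R -> R) (tau0 : R)
  (* hypotheses on f *)
  (Hfpos : forall x, 0 < f x)
  (Hflip : Lipschitz f)
  (Hfder : forall x, derivable_pt_lim f x (f' x))
  (Hf'cont : continuity f')
  (Hf'neg : forall x, f' x <= 0)
  (Hflim : tends_to_zero_at_pinf f)
  (* r and A *)
  (Hr : 0 < r)
  (HA : forall x, x < r -> continuity_pt A x)
  (* tau : [0,r) -> [0,oo), C^1 solution of the delay equation *)
  (Htau_nonneg : forall t, 0 <= t < r -> 0 <= tau t)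
  (Htau_C1 : exists tau' : R -> R,
      (forall t, 0 <= t < r ->
         derivable_within_lim (fun s => 0 <= s < r) tau t (tau' t)) /\
      (forall t, 0 <= t < r ->
         forall eps, eps > 0 -> exists delta, delta > 0 /\
           forall s, 0 <= s < r -> Rabs (s - t) < delta ->
             Rabs (tau' s - tau' t) < eps) /\
      (forall t, 0 <= t < r ->
         tau' t = 1 - f (A t) / f (A (t - tau t))))
  (Htau0 : tau 0 = tau0) (Htau0_nonneg : 0 <= tau0) :
  (tau0 > 0 -> forall t, 0 <= t < r -> tau t > 0) /\
  (tau0 = 0 -> forall t, 0 <= t < r -> tau t = 0).
Proof.
  destruct Htau_C1 as [tau' [Hd [_ Heq]]].
  set (g := fun s => f (A s)).
  assert (Hfc : forall x, continuity_pt f x).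
  { intros x. apply derivable_continuous_pt. exists (f' x). apply Hfder. }
  assert (Hgc : forall z, z < r -> continuity_pt g z).
  { intros z Hz. unfold g. apply (continuity_pt_comp A f). apply HA; auto. apply Hfc. }
  assert (Hgpos : forall z, 0 < g z) by (intros; apply Hfpos).
  set (Phi := fun x => RInt g 0 x).
  set (H := fun t => Phi t - Phi (t - tau t)).
  assert (Htd : forall t, 0 < t < r -> is_derive tau t (tau' t)).
  { intros t Ht. apply is_derive_Reals. intros eps Heps.
    destruct (Hd t (conj (Rlt_le _ _ (proj1 Ht)) (proj2 Ht)) eps Heps) as [d [Hd0 Hd1]].
    assert (Hm : 0 < Rmin d (Rmin t (r - t))).
    { apply Rmin_pos; [lra|apply Rmin_pos; lra]. }
    exists (mkposreal _ Hm). intros h Hh0 Hh. simpl in Hh.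
    apply Hd1; auto.
    - apply Rlt_le_trans with (1 := Hh), Rmin_l.
    - assert (Rabs h < t) by (apply Rlt_le_trans with (1 := Hh); eapply Rle_trans; [apply Rmin_r|apply Rmin_l]).
      assert (Rabs h < r - t) by (apply Rlt_le_trans with (1 := Hh); eapply Rle_trans; [apply Rmin_r|apply Rmin_r]).
      apply Rabs_def2 in H0. apply Rabs_def2 in H1. lra. }
  assert (HHd : forall t, 0 < t < r -> is_derive H t 0).
  { intros t Ht.
    assert (Hs : t - tau t < r) by (pose proof (Htau_nonneg t ltac:(lra)); lra).
    assert (D1 : is_derive Phi t (g t)) by (apply (Phi_der g r); auto; lra).
    assert (Di : is_derive (fun t => t - tau t) t (1 - tau' t)).
    { pose proof (is_derive_minus _ _ _ _ _ (is_derive_id t) (Htd t Ht)) as D.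
      eapply is_derive_ext; [|exact D]. intros; reflexivity. }
    assert (D2 := is_derive_comp Phi (fun t => t - tau t) t _ _ (Phi_der g r Hgc Hr _ Hs) Di).
    pose proof (is_derive_minus _ _ _ _ _ D1 D2) as D.
    replace 0 with (minus (g t) (scal (1 - tau' t) (g (t - tau t)))).
    { eapply is_derive_ext; [|exact D]. intros; reflexivity. }
    rewrite Heq by lra. unfold minus, plus, opp, scal; simpl. unfold mult; simpl. unfold g. field. apply Rgt_not_eq, Hfpos. }
  assert (Hconst : forall a b, 0 < a < r -> 0 < b < r -> H a = H b).
  { intros a b Ha Hb.
    destruct (MVT_gen H a b (fun _ => 0)) as [c [_ Hc]].
    - intros x Hx. apply HHd. split.
      + apply Rle_lt_trans with (2 := proj1 Hx). apply Rmin_glb; lra.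
      + apply Rlt_le_trans with (1 := proj2 Hx). apply Rmax_lub; lra.
    - intros x Hx. apply (der_cont H x 0). apply HHd. split.
      + apply Rlt_le_trans with (2 := proj1 Hx). apply Rmin_glb_lt; lra.
      + apply Rle_lt_trans with (1 := proj2 Hx). apply Rmax_lub_lt; lra.
    - simpl in Hc. lra. }
  assert (Htrc : forall e, e > 0 -> exists d, d > 0 /\ forall s, 0 < s < r -> s < d -> Rabs (tau s - tau 0) < e).
  { intros e He.
    destruct (Hd 0 (conj (Rle_refl 0) Hr) 1 Rlt_0_1) as [d [Hd0 Hd1]].
    set (K := Rabs (tau' 0) + 1).
    assert (HK : 0 < K) by (unfold K; pose proof (Rabs_pos (tau' 0)); lra).
    exists (Rmin d (e / K)). split. { apply Rmin_pos; [lra|]. apply Rdiv_lt_0_compat; lra. }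
    intros s Hs Hsd.
    assert (Hs1 : s < d) by (apply Rlt_le_trans with (1 := Hsd), Rmin_l).
    assert (Hs2 : s < e / K) by (apply Rlt_le_trans with (1 := Hsd), Rmin_r).
    assert (Q := Hd1 s ltac:(lra) ltac:(rewrite Rabs_pos_eq; lra) ltac:(lra)).
    rewrite Rplus_0_l in Q.
    assert (E : tau s - tau 0 = s * ((tau s - tau 0) / s)) by (field; lra).
    rewrite E, Rabs_mult, (Rabs_pos_eq s) by lra.
    assert (Rabs ((tau s - tau 0) / s) < K).
    { unfold K. pose proof (Rabs_triang_inv ((tau s - tau 0) / s) (tau' 0)). lra. }
    apply Rle_lt_trans with (s * K). apply Rmult_le_compat_l; lra.
    apply (Rmult_lt_compat_r K) in Hs2; auto.
    replace (e / K * K) with e in Hs2 by (field; lra). exact Hs2. }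
  assert (HPc : forall x, x < r -> continuity_pt Phi x).
  { intros x Hx. apply (der_cont Phi x (g x)). apply (Phi_der g r); auto. }
  assert (HHrc : forall e, e > 0 -> exists d, d > 0 /\ forall s, 0 < s < r -> s < d -> Rabs (H s - H 0) < e).
  { intros e He.
    destruct (cont_eps Phi 0 (HPc 0 Hr) (e/2) ltac:(lra)) as [d1 [Hd1 P1]].
    destruct (cont_eps Phi (0 - tau 0) (HPc (0 - tau 0) ltac:(lra)) (e/2) ltac:(lra)) as [d2 [Hd2 P2]].
    destruct (Htrc (d2/2) ltac:(lra)) as [d3 [Hd3 P3]].
    exists (Rmin d1 (Rmin (d2/2) d3)). split.
    { apply Rmin_pos; [lra|apply Rmin_pos; lra]. }
    intros s Hs Hsd.
    assert (s < d1) by (apply Rlt_le_trans with (1 := Hsd), Rmin_l).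
    assert (s < d2/2) by (apply Rlt_le_trans with (1 := Hsd); eapply Rle_trans; [apply Rmin_r|apply Rmin_l]).
    assert (s < d3) by (apply Rlt_le_trans with (1 := Hsd); eapply Rle_trans; [apply Rmin_r|apply Rmin_r]).
    specialize (P3 s Hs ltac:(lra)).
    assert (A1 := P1 s ltac:(rewrite Rminus_0_r, Rabs_pos_eq; lra)).
    assert (A2 := P2 (s - tau s) ltac:(apply Rabs_def2 in P3; apply Rabs_def1; lra)).
    unfold H. apply Rabs_def2 in A1. apply Rabs_def2 in A2. apply Rabs_def1; lra. }
  assert (HH0 : forall t, 0 <= t < r -> H t = H 0).
  { intros t Ht. destruct (Req_dec t 0) as [->|Hn]; auto.
    apply Rminus_diag_uniq, zero_of_small. intros e He.
    destruct (HHrc e He) as [d [Hd0 Hd1]].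
    set (s := Rmin t (d/2)).
    assert (0 < s) by (apply Rmin_pos; lra).
    assert (s <= t) by apply Rmin_l.
    assert (s <= d/2) by apply Rmin_r.
    rewrite (Hconst t s) by lra. apply Hd1; lra. }
  assert (Hst : forall a b, a < b -> b < r -> Phi a < Phi b).
  { intros. apply (Phi_strict g r); auto. }
  split.
  - intros Hp t Ht.
    assert (H0p : H 0 > 0) by (unfold H; apply Rgt_minus, Hst; lra).
    pose proof (Htau_nonneg t Ht).
    destruct (Req_dec (tau t) 0) as [Z|]; [|lra].
    exfalso. rewrite <- (HH0 t Ht) in H0p. unfold H in H0p. rewrite Z, Rminus_0_r in H0p. lra.
  - intros Hz t Ht.
    assert (H00 : H 0 = 0) by (unfold H; rewrite Htau0, Hz, !Rminus_0_r; ring).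
    pose proof (Htau_nonneg t Ht).
    destruct (Rle_lt_or_eq_dec _ _ H0) as [Hp|]; auto.
    exfalso. assert (Phi (t - tau t) < Phi t) by (apply Hst; lra).
    pose proof (HH0 t Ht). unfold H in *. lra.
Qed.
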